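(* A (possibly infinite) graph $G$ is $\omega$-evadible if and only if at least one of the following holds: (1) for every $k\in\mathbb{N}$, $G$ contains a path on $k$ vertices as a subgraph; (2) for every $k\in\mathbb{N}$, there is a vertex $v_k\in V(G)$ lying on $k$ pairwise edge-disjoint cycles of $G$.
   Context: Cat Herding is played on a simple, possibly infinite graph $G$. The cat first places its token on a vertex. Then the players alternate, the herder moving first: the herder deletes one edge of the current graph, and then, unless the cat's current vertex has degree $0$ in the current graph, the cat moves its token along a finite path with at least one edge in the current graph to a different vertex. The cat is captured when its vertex has degree $0$ in the current graph. $G$ is $k$-evadible if the cat has a strategy (including its choice of starting vertex) that, against every herder strategy, yields a legal cat move after each of the first $k-1$ edge deletions; $G$ is $\omega$-evadible if it is $k$-evadible for every $k\in\mathbb{N}$. *)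

(* Defs.v *)
From Stdlib Require Import List Arith.
Import ListNotations.

Section CatHerding.
Variable V : Type.

Definition simple_graph (adj : V -> V -> Prop) : Prop :=
  (forall x y, adj x y -> adj y x) /\ (forall x, ~ adj x x).

Fixpoint chain (R : V -> V -> Prop) (p : list V) : Prop :=
  match p with
  | [] => True
  | x :: q =>
      match q with
      | [] => True
      | y :: _ => R x y /\ chain R q
      end
  end.

Definition del_edge (E : V -> V -> Prop) (u v : V) : V -> V -> Prop :=
  fun x y => E x y /\ ~ (x = u /\ y = v) /\ ~ (x = v /\ y = u).

(* a legal cat move in the current graph E: c moves along a finite path with
   at least one edge (distinct vertices c :: q) ending at c' (<> c) *)
Definition cat_move (E : V -> V -> Prop) (c c' : V) : Prop :=
  exists q : list V, q <> [] /\ NoDup (c :: q) /\ chain E (c :: q) /\ c' = last q c.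

(* survives n: n more rounds: the cat, sitting at c in the current graph E,
   is not captured, and for each edge the herder deletes, the cat has a legal
   move to a position from which it survives n more rounds *)
Fixpoint survives (n : nat) (E : V -> V -> Prop) (c : V) : Prop :=
  match n with
  | 0 => True
  | S m => (exists y, E c y) /\
           forall u v, E u v ->
             exists c', cat_move (del_edge E u v) c c' /\
                        survives m (del_edge E u v) c'
  end.

Definition k_evadible (adj : V -> V -> Prop) (k : nat) : Prop :=
  exists c : V, survives (k - 1) adj c.

Definition omega_evadible (adj : V -> V -> Prop) : Prop :=
  forall k : nat, k_evadible adj k.

Definition has_path_on (adj : V -> V -> Prop) (k : nat) : Prop :=
  exists p : list V, length p = k /\ NoDup p /\ chain adj p.

Definition is_cycle (adj : V -> V -> Prop) (p : list V) : Prop :=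
  exists x q, p = x :: q /\ 3 <= length p /\ NoDup p /\ chain adj p /\
              adj (last q x) x.

Definition cyc_edge (p : list V) (u v : V) : Prop :=
  (exists l1 l2, p = l1 ++ u :: v :: l2) \/
  (exists x q, p = x :: q /\ u = last q x /\ v = x).

Definition cycle_has_edge (p : list V) (u v : V) : Prop :=
  cyc_edge p u v \/ cyc_edge p v u.

Definition edge_disjoint (p1 p2 : list V) : Prop :=
  forall u v, cycle_has_edge p1 u v -> ~ cycle_has_edge p2 u v.

Definition on_k_edge_disjoint_cycles (adj : V -> V -> Prop) (v : V) (k : nat) : Prop :=
  exists C : nat -> list V,
    (forall i, i < k -> is_cycle adj (C i) /\ In v (C i)) /\
    (forall i j, i < j -> j < k -> edge_disjoint (C i) (C j)).

End CatHerding.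

(* Main.v *)
Require Import Defs.
From Stdlib Require Import List Arith Lia Permutation Classical.
Import ListNotations.

Section L.
Variable V : Type.
Implicit Types (R E H : V -> V -> Prop) (l q : list V).

Definition sym R := forall x y, R x y -> R y x.
Definition subrel (R S : V -> V -> Prop) := forall x y : V, R x y -> S x y.
Definition adj_in l (a b : V) := exists l1 l2, l = l1 ++ a :: b :: l2.

Inductive reach R : V -> V -> Prop :=
| r_refl x : reach R x x
| r_step x y z : R x y -> reach R y z -> reach R x z.

Lemma last_indep q (x y : V) : q <> [] -> last q x = last q y.
Proof. induction q as [|a q IH]; intros H; [congruence|]. destruct q. reflexivity.
  simpl. simpl in IH. apply IH. discriminate. Qed.

Lemma last_cons (x d : V) q : last (x :: q) d = last q x.
Proof. destruct q. reflexivity. change (last (v :: q) d = last (v :: q) x). apply last_indep. discriminate. Qed.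

Lemma last_app_cons l (x d : V) l2 : last (l ++ x :: l2) d = last l2 x.
Proof. induction l as [|a l IH]; simpl.
  - apply last_cons.
  - destruct (l ++ x :: l2) eqn:E. destruct l; discriminate. rewrite <- IH. reflexivity. Qed.

Lemma last_in q (x : V) : q <> [] -> In (last q x) q.
Proof. revert x. induction q as [|a q IH]; intros x H; [congruence|].
  rewrite last_cons. destruct q. simpl; auto. right. apply IH. discriminate. Qed.

Lemma last_in2 q (x : V) : In (last q x) (x :: q).
Proof. destruct q. simpl; auto. right; apply last_in; discriminate. Qed.

Lemma chain_cons2 R x y l : chain V R (x :: y :: l) <-> R x y /\ chain V R (y :: l).
Proof. simpl. tauto. Qed.

Lemma chain_tail R x l : chain V R (x :: l) -> chain V R l.
Proof. destruct l; simpl; tauto. Qed.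

Lemma chain_app R l1 x l2 : chain V R (l1 ++ x :: l2) <-> chain V R (l1 ++ [x]) /\ chain V R (x :: l2).
Proof. induction l1 as [|a l1 IH]; simpl.
  - destruct l2; simpl; tauto.
  - destruct l1 as [|b l1]; simpl in *.
    + destruct l2; simpl; tauto.
    + rewrite IH. tauto. Qed.

Lemma chain_prefix R l m : chain V R (l ++ m) -> chain V R l.
Proof. induction l as [|a l IH]; simpl; auto.
  destruct l as [|b l]; simpl in *; auto. destruct m; simpl; tauto. Qed.

Lemma chain_suffix R l m : chain V R (l ++ m) -> chain V R m.
Proof. induction l as [|a l IH]; simpl; auto. intros H. apply IH. apply chain_tail with a. exact H. Qed.

Lemma chain_mono R (S : V -> V -> Prop) l : subrel R S -> chain V R l -> chain V S l.
Proof. intros HS. induction l as [|a l IH]; simpl; auto.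
  destruct l; auto. intros [H1 H2]; split; auto. Qed.

Lemma chain_adj R l a b : chain V R l -> adj_in l a b -> R a b.
Proof. intros Hc [l1 [l2 ->]]. apply chain_suffix in Hc. simpl in Hc. tauto. Qed.

Lemma chain_of_adj R l : (forall a b, adj_in l a b -> R a b) -> chain V R l.
Proof. induction l as [|a l IH]; simpl; auto. destruct l as [|b l]; auto. intros H.
  split. apply H. exists [], l. reflexivity.
  apply IH. intros x y [l1 [l2 E]]. apply H. exists (a :: l1), l2. rewrite E. reflexivity. Qed.

Lemma adj_in_cons l (x a b : V) : adj_in l a b -> adj_in (x :: l) a b.
Proof. intros [l1 [l2 E]]. exists (x::l1), l2. rewrite E; reflexivity. Qed.

Lemma adj_in_In l (a b : V) : adj_in l a b -> In a l /\ In b l.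
Proof. intros [l1 [l2 ->]]. split; apply in_or_app; simpl; auto. Qed.

Lemma adj_in_app_r l m (a b : V) : adj_in m a b -> adj_in (l ++ m) a b.
Proof. intros [l1 [l2 ->]]. exists (l ++ l1), l2. rewrite <- app_assoc. reflexivity. Qed.

Lemma adj_in_rev l (a b : V) : adj_in l a b -> adj_in (rev l) b a.
Proof. intros [l1 [l2 ->]]. exists (rev l2), (rev l1). rewrite rev_app_distr. simpl.
  repeat rewrite <- app_assoc. reflexivity. Qed.

Lemma chain_rev R l : sym R -> chain V R l -> chain V R (rev l).
Proof. intros Hs Hc. apply chain_of_adj. intros a b Ha. apply adj_in_rev in Ha.
  rewrite rev_involutive in Ha. apply Hs. eapply chain_adj; eauto. Qed.

Lemma chain_snoc R (y x : V) l : chain V R (y :: l) -> R (last l y) x -> chain V R (y :: l ++ [x]).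
Proof. revert y. induction l as [|a l IH]; intros y H1 H2. simpl in *. tauto.
  rewrite last_cons in H2. apply chain_cons2 in H1. destruct H1 as [H1 H3].
  change (y :: (a :: l) ++ [x]) with (y :: a :: (l ++ [x])). apply chain_cons2. split; auto. Qed.

Lemma chain_snoc_inv R (y x : V) l : chain V R (y :: l ++ [x]) -> R (last l y) x.
Proof. intros H. change (y :: l ++ [x]) with ((y :: l) ++ [x]) in H.
  assert (E : y :: l = removelast (y :: l) ++ [last (y :: l) y]) by (apply app_removelast_last; discriminate).
  rewrite <- last_cons with (d := y). apply (chain_adj R _ _ _ H).
  rewrite E at 1. exists (removelast (y :: l)), []. rewrite <- app_assoc. reflexivity. Qed.

Lemma reach_trans R x y z : reach R x y -> reach R y z -> reach R x z.
Proof. induction 1; auto. intros. eapply r_step; eauto. Qed.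

Lemma reach_edge R x y : R x y -> reach R x y.
Proof. intros; eapply r_step; eauto. apply r_refl. Qed.

Lemma reach_sym R x y : sym R -> reach R x y -> reach R y x.
Proof. intros Hs. induction 1. apply r_refl. eapply reach_trans; eauto. apply reach_edge; auto. Qed.

Lemma reach_mono R (S : V -> V -> Prop) x y : subrel R S -> reach R x y -> reach S x y.
Proof. intros HS. induction 1. apply r_refl. eapply r_step; eauto. Qed.

Lemma reach_sub R (S : V -> V -> Prop) x y : (forall a b, R a b -> reach S a b) -> reach R x y -> reach S x y.
Proof. intros HS. induction 1. apply r_refl. eapply reach_trans; eauto. Qed.

Lemma chain_reach R x q : chain V R (x :: q) -> reach R x (last q x).
Proof. revert x. induction q as [|y q IH]; intros x H. apply r_refl.
  apply chain_cons2 in H. destruct H. rewrite last_cons. eapply r_step; eauto. Qed.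

Lemma chain_reach_in R x q y : chain V R (x :: q) -> In y (x :: q) -> reach R x y.
Proof. revert x. induction q as [|a q IH]; intros x H Hy.
  destruct Hy as [<-|[]]. apply r_refl.
  apply chain_cons2 in H. destruct H. destruct Hy as [<-|Hy]. apply r_refl.
  eapply r_step; eauto. Qed.

Lemma shorten R x y : reach R x y -> exists q, NoDup (x :: q) /\ chain V R (x :: q) /\ last q x = y.
Proof. induction 1 as [x|x y z Hxy Hyz IH].
  - exists []. repeat split; auto. constructor; auto. constructor.
  - destruct IH as [q [Hn [Hc Hl]]]. destruct (classic (In x (y :: q))) as [Hi|Hi].
    + apply in_split in Hi. destruct Hi as [l1 [l2 E]]. exists l2.
      rewrite E in Hn, Hc. split; [|split].
      * apply NoDup_app_remove_l in Hn. exact Hn.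
      * apply chain_suffix in Hc. exact Hc.
      * rewrite <- Hl. replace (last q y) with (last (y::q) x) by apply last_cons.
        rewrite E. rewrite last_app_cons. reflexivity.
    + exists (y :: q). split; [|split].
      * constructor; auto.
      * apply chain_cons2; auto.
      * rewrite last_cons. exact Hl. Qed.

Definition avoid E (d : V) := fun a b => E a b /\ a <> d /\ b <> d.

Lemma firstd E d c : reach E c d -> c <> d -> exists x, E x d /\ reach (avoid E d) c x.
Proof. induction 1 as [x|x y z Hxy Hyz IH]; intros Hne. congruence.
  destruct (classic (y = z)) as [<-|Hn]. exists x; split; auto. apply r_refl.
  destruct (IH Hn) as [w [Hw Hr]]. exists w; split; auto. eapply r_step; eauto. split; auto. Qed.

Lemma anchor H (B : V -> V -> Prop) (S : list V) v z :
  (forall a b, B a b -> In a S) -> reach H v z ->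
  reach (fun a b => H a b /\ ~ B a b) v z \/ exists s, In s S /\ reach (fun a b => H a b /\ ~ B a b) v s.
Proof. intros HB. induction 1 as [x|x y z Hxy Hyz IH]. left; apply r_refl.
  destruct (classic (B x y)) as [Hb|Hb]. right. exists x. split. eauto. apply r_refl.
  destruct IH as [IH|[s [Hs IH]]]. left; eapply r_step; [split; eauto|exact IH].
  right. exists s; split; auto. eapply r_step; [split; eauto|exact IH]. Qed.

Lemma cat_move_reach E c c' : cat_move V E c c' -> reach E c c'.
Proof. intros [q [_ [_ [Hc ->]]]]. apply chain_reach; auto. Qed.

Lemma cat_move_neq E c c' : cat_move V E c c' -> c' <> c.
Proof. intros [q [Hq [Hn [_ ->]]]]. intros E1. inversion Hn; subst. apply H1. rewrite <- E1 at 1.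
  apply last_in; auto. Qed.

Lemma del_sub E u v : subrel (del_edge V E u v) E.
Proof. intros x y H. apply H. Qed.

Lemma del_sym E u v : sym E -> sym (del_edge V E u v).
Proof. intros Hs x y [H1 [H2 H3]]. split; auto. split; intros [? ?]; subst; tauto. Qed.

Lemma survives_S n E c : survives V (S n) E c -> survives V n E c.
Proof. revert E c. induction n; intros E c Hs. exact I.
  destruct Hs as [Hy Hm]. split. exact Hy. intros u v Huv. destruct (Hm u v Huv) as [c' [H1 H2]].
  exists c'. split; auto. Qed.

Lemma survives_le m n E c : m <= n -> survives V n E c -> survives V m E c.
Proof. induction 1; auto. intros Hs. apply IHle. apply survives_S. exact Hs. Qed.


Lemma adj_nodup_neq l (x y : V) : NoDup l -> adj_in l x y -> x <> y.
Proof. intros Hn [l1 [l2 E]] <-. subst. apply NoDup_remove_2 in Hn. apply Hn.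
  apply in_or_app. simpl; auto. Qed.

Lemma chain_del E l u v : chain V E l -> ~ adj_in l u v -> ~ adj_in l v u -> chain V (del_edge V E u v) l.
Proof. intros Hc H1 H2. apply chain_of_adj. intros a b Hab. split. eapply chain_adj; eauto.
  split; intros [-> ->]; auto. Qed.

Lemma nodup_app_disj (x : V) a b : NoDup (a ++ b) -> In x a -> In x b -> False.
Proof. induction a as [|y a IH]; simpl; intros Hn Ha Hb. auto. inversion Hn; subst.
  destruct Ha as [<-|Ha]. apply H1. apply in_or_app; auto. eauto. Qed.

Lemma common_c (c x : V) a b : NoDup (c :: a ++ b) -> In x (c :: a) -> In x (c :: b) -> x = c.
Proof. intros Hn Ha Hb. inversion Hn as [|? ? Hc Hn']; subst.
  destruct Ha as [Ha|Ha]; [congruence|]. destruct Hb as [Hb|Hb]; [congruence|].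
  exfalso. eapply nodup_app_disj; eauto. Qed.

Lemma pow2_S n : Nat.pow 2 (S n) = 2 * Nat.pow 2 n.
Proof. reflexivity. Qed.

Lemma pow2_pos n : 1 <= Nat.pow 2 n.
Proof. induction n; simpl; lia. Qed.

Lemma move_arm n E c b : sym E -> chain V E (c :: b) -> NoDup (c :: b) -> Nat.pow 2 (S n) <= S (length b) ->
  (forall c a b, chain V E (c :: a) -> chain V E (c :: b) -> NoDup (c :: a ++ b) ->
     Nat.pow 2 n <= S (length a) -> Nat.pow 2 n <= S (length b) -> survives V n E c) ->
  exists c', cat_move V E c c' /\ survives V n E c'.
Proof. intros Hs Hc Hn Hl IH. rewrite pow2_S in Hl. pose proof (pow2_pos n) as Hp.
  set (p := Nat.pow 2 n) in *.
  assert (Hb : b = firstn (p - 1) b ++ skipn (p - 1) b) by (symmetry; apply firstn_skipn).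
  destruct (skipn (p - 1) b) as [|c' m2] eqn:Es.
  { exfalso. assert (length (skipn (p - 1) b) = length b - (p - 1)) by apply length_skipn.
    rewrite Es in H. simpl in H. lia. }
  set (m1 := firstn (p - 1) b) in *.
  assert (Lm1 : length m1 = p - 1) by (unfold m1; rewrite length_firstn; lia).
  assert (Lm2 : length b = length m1 + S (length m2)) by (rewrite Hb at 1; rewrite length_app; reflexivity).
  rewrite Hb in Hc, Hn. change (c :: m1 ++ c' :: m2) with ((c :: m1) ++ c' :: m2) in Hc, Hn.
  apply chain_app in Hc. destruct Hc as [Hc1 Hc2].
  exists c'. split.
  - exists (m1 ++ [c']). split. destruct m1; discriminate. split.
    + assert (E1: (c :: m1) ++ c' :: m2 = ((c::m1) ++ [c']) ++ m2) by (rewrite <- app_assoc; reflexivity).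
      rewrite E1 in Hn. exact (NoDup_app_remove_r _ _ Hn).
    + split. exact Hc1. rewrite last_last. reflexivity.
  - apply IH with (a := rev m1 ++ [c]) (b := m2).
    + replace (c' :: rev m1 ++ [c]) with (rev ((c :: m1) ++ [c'])) by (rewrite rev_app_distr; reflexivity).
      apply chain_rev; auto.
    + exact Hc2.
    + apply Permutation_NoDup with ((c::m1) ++ c' :: m2); auto.
      eapply perm_trans. apply Permutation_sym, Permutation_middle.
      apply perm_skip. apply Permutation_app_tail.
      change (rev m1 ++ [c]) with (rev (c :: m1)). apply Permutation_rev.
    + rewrite length_app, length_rev. simpl. lia.
    + lia.
Qed.


Lemma nodup_arm_l (c : V) a b : NoDup (c :: a ++ b) -> NoDup (c :: a).
Proof. intros H. change (c :: a ++ b) with ((c :: a) ++ b) in H. exact (NoDup_app_remove_r _ _ H). Qed.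

Lemma nodup_arm_r (c : V) a b : NoDup (c :: a ++ b) -> NoDup (c :: b).
Proof. intros H. apply Permutation_NoDup with (l' := a ++ c :: b) in H.
  exact (NoDup_app_remove_l _ _ H). apply Permutation_middle. Qed.

Lemma arms n : forall E c a b, sym E -> chain V E (c :: a) -> chain V E (c :: b) -> NoDup (c :: a ++ b) ->
  Nat.pow 2 n <= S (length a) -> Nat.pow 2 n <= S (length b) -> survives V n E c.
Proof. induction n as [|n IH]; intros E c a b Hs Ha Hb Hn La Lb. exact I.
  rewrite pow2_S in La, Lb. pose proof (pow2_pos n).
  split.
  - destruct b as [|y b]. simpl in Lb; lia. exists y. apply chain_cons2 in Hb. destruct Hb as [Hb1 _]. exact Hb1.
  - intros u v Huv.
    assert (IH' := IH (del_edge V E u v)).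
    destruct (classic (adj_in (c :: b) u v \/ adj_in (c :: b) v u)) as [Hy|Hno].
    + apply (move_arm n (del_edge V E u v) c a).
      * apply del_sym; auto.
      * apply chain_del; auto.
        -- intros Hx. pose proof (adj_in_In _ _ _ Hx) as [I1 I2].
           assert (In u (c :: b) /\ In v (c :: b)) as [J1 J2] by (destruct Hy as [Hy|Hy]; apply adj_in_In in Hy; tauto).
           pose proof (common_c c u a b Hn I1 J1). pose proof (common_c c v a b Hn I2 J2). subst.
           eapply adj_nodup_neq. eapply nodup_arm_l; eauto. exact Hx. reflexivity.
        -- intros Hx. pose proof (adj_in_In _ _ _ Hx) as [I1 I2].
           assert (In u (c :: b) /\ In v (c :: b)) as [J1 J2] by (destruct Hy as [Hy|Hy]; apply adj_in_In in Hy; tauto).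
           pose proof (common_c c u a b Hn I2 J1). pose proof (common_c c v a b Hn I1 J2). subst.
           eapply adj_nodup_neq. eapply nodup_arm_l; eauto. exact Hx. reflexivity.
      * eapply nodup_arm_l; eauto.
      * simpl; lia.
      * intros c0 a0 b0 H1 H2 H3 H4 H5; apply IH' with a0 b0; auto; apply del_sym; auto.
    + apply (move_arm n (del_edge V E u v) c b).
      * apply del_sym; auto.
      * apply chain_del; auto.
      * eapply nodup_arm_r; eauto.
      * simpl; lia.
      * intros c0 a0 b0 H1 H2 H3 H4 H5; apply IH' with a0 b0; auto; apply del_sym; auto.
Qed.

Lemma paths_evadible G : sym G -> (forall k, has_path_on V G k) -> omega_evadible V G.
Proof. intros Hs Hp k. set (n := k - 1). unfold k_evadible. fold n.
  pose proof (pow2_pos n). set (p := Nat.pow 2 n) in *.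
  destruct (Hp (2 * p)) as [l [Ll [Hn Hc]]].
  assert (Hl : l = firstn (p - 1) l ++ skipn (p - 1) l) by (symmetry; apply firstn_skipn).
  destruct (skipn (p - 1) l) as [|c l2] eqn:Es.
  { exfalso. assert (length (skipn (p - 1) l) = length l - (p - 1)) by apply length_skipn.
    rewrite Es in H0. simpl in H0. lia. }
  set (l1 := firstn (p - 1) l) in *.
  assert (L1 : length l1 = p - 1) by (unfold l1; rewrite length_firstn; lia).
  assert (L2 : length l = length l1 + S (length l2)) by (rewrite Hl at 1; rewrite length_app; reflexivity).
  rewrite Hl in Hc, Hn. apply chain_app in Hc. destruct Hc as [Hc1 Hc2].
  exists c. apply arms with (a := rev l1) (b := l2); auto.
  - replace (c :: rev l1) with (rev (l1 ++ [c])) by (rewrite rev_app_distr; reflexivity).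
    apply chain_rev; auto.
  - apply Permutation_NoDup with (l1 ++ c :: l2); auto.
    eapply perm_trans. apply Permutation_sym, Permutation_middle. apply perm_skip.
    apply Permutation_app_tail. apply Permutation_rev.
  - rewrite length_rev. fold p. lia.
  - fold p. lia.
Qed.


Lemma is_cycle_del E p a b : is_cycle V E p -> ~ cycle_has_edge V p a b -> is_cycle V (del_edge V E a b) p.
Proof. intros [x [q [-> [Hl [Hn [Hc Hcl]]]]]] Hne. exists x, q. split; [reflexivity|]. split; [exact Hl|].
  split; [exact Hn|]. split; [|split; [exact Hcl|split]].
  - apply chain_of_adj. intros u v Huv. split. eapply chain_adj; eauto.
    split; intros [-> ->]; apply Hne; [left|right]; left; exact Huv.
  - intros [E1 E2]. apply Hne. left. right. exists x, q. subst. auto.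
  - intros [E1 E2]. apply Hne. right. right. exists x, q. subst. auto.
Qed.

Lemma is_cycle_mono E F p : subrel E F -> is_cycle V E p -> is_cycle V F p.
Proof. intros HS [x [q [-> [Hl [Hn [Hc Hcl]]]]]]. exists x, q. repeat split; auto.
  eapply chain_mono; eauto. Qed.

Lemma del_on_k E v J a b : on_k_edge_disjoint_cycles V E v (S J) -> on_k_edge_disjoint_cycles V (del_edge V E a b) v J.
Proof. intros [C [Hc Hd]].
  destruct (classic (exists i0, i0 < S J /\ cycle_has_edge V (C i0) a b)) as [[i0 [Hi0 Hh]]|Hno].
  - set (f := fun i => if Nat.ltb i i0 then i else S i).
    assert (Hf1 : forall i, i < J -> f i < S J) by (intros i Hi; unfold f; destruct (Nat.ltb_spec i i0); lia).
    assert (Hf2 : forall i, f i <> i0) by (intros i; unfold f; destruct (Nat.ltb_spec i i0); lia).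
    assert (Hf3 : forall i i', i < i' -> f i < f i') by (intros i i' Hi; unfold f; destruct (Nat.ltb_spec i i0); destruct (Nat.ltb_spec i' i0); lia).
    exists (fun i => C (f i)). split.
    + intros i Hi. destruct (Hc (f i) (Hf1 i Hi)) as [H1 H2]. split; auto.
      apply is_cycle_del; [exact H1|]. intros Hh2. specialize (Hf2 i).
      destruct (Nat.lt_ge_cases i0 (f i)) as [L|L].
      * eapply (Hd i0 (f i)); eauto.
      * eapply (Hd (f i) i0); eauto. lia.
    + intros i i' Hi Hi'. apply Hd; auto.
  - exists C. split.
    + intros i Hi. destruct (Hc i (ltac:(lia))) as [H1 H2]. split; auto.
      apply is_cycle_del; [exact H1|]. intros Hh. apply Hno. exists i. split; [lia|exact Hh].
    + intros i i' Hi Hi'. apply Hd; lia.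
Qed.

Lemma rotate E p v : is_cycle V E p -> In v p -> exists w rest, is_cycle V E (v :: w :: rest).
Proof. intros [x [q [-> [Hl [Hn [Hc Hcl]]]]]] Hv. apply in_split in Hv. destruct Hv as [l1 [l2 E1]].
  assert (Hcyc : is_cycle V E (v :: l2 ++ l1)).
  { destruct l1 as [|y l1].
    - simpl in E1. injection E1; intros; subst. rewrite app_nil_r. exists v, l2. repeat split; auto.
    - simpl in E1. injection E1; intros E2 E3; subst y.
      exists v, (l2 ++ x :: l1). rewrite E2 in Hc, Hn, Hcl, Hl.
      change (x :: l1 ++ v :: l2) with ((x :: l1) ++ v :: l2) in Hc, Hn, Hl.
      apply chain_app in Hc. destruct Hc as [Hc1 Hc2].
      rewrite last_app_cons in Hcl.
      repeat split.
      + rewrite length_app in Hl. simpl in *. rewrite length_app. simpl. lia.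
      + apply Permutation_NoDup with ((x :: l1) ++ v :: l2); auto.
        eapply perm_trans. apply Permutation_sym, Permutation_middle. apply perm_skip.
        apply Permutation_app_comm.
      + change (v :: l2 ++ x :: l1) with ((v :: l2) ++ x :: l1). apply chain_app. split.
        * apply chain_snoc; auto.
        * eapply chain_prefix; eauto.
      + rewrite last_app_cons. apply chain_snoc_inv. exact Hc1. }
  destruct (l2 ++ l1) as [|w rest] eqn:E3.
  - destruct Hcyc as [x' [q' [E4 [Hl' _]]]]. rewrite E4 in Hl'. injection E4; intros; subst. simpl in Hl'. lia.
  - exists w, rest. exact Hcyc.
Qed.

Lemma nodup_head_adj (x y : V) l : NoDup (x :: l) -> adj_in (x :: l) y x -> False.
Proof. intros Hn [l1 [l2 E1]]. destruct l1 as [|a l1]; simpl in E1; injection E1; intros.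
  - subst. inversion Hn as [|? ? Hni ?]; subst. apply Hni. left; auto.
  - subst. inversion Hn as [|? ? Hni ?]; subst. apply Hni. apply in_or_app. right. right. left. reflexivity.
Qed.

Lemma arc_no1 (w v : V) rest : rest <> [] -> NoDup (w :: rest ++ [v]) -> ~ In v rest -> ~ adj_in (w :: rest ++ [v]) w v.
Proof. intros Hr Hn2 Hv [l1 [l2 E2]]. destruct l1 as [|z l1]; simpl in E2.
  - injection E2; intros E3. destruct rest as [|r rest]; simpl in E3. 
    + congruence.
    + injection E3; intros; subst. apply Hv. left; auto.
  - injection E2; intros E3 E4. subst z. inversion Hn2 as [|? ? Hni ?]; subst. apply Hni. rewrite E3. apply in_or_app. right; left; auto.
Qed.

Lemma cyc_step E v w rest a b : sym E -> is_cycle V E (v :: w :: rest) -> cat_move V (del_edge V E a b) w v.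
Proof. intros Hs [x [q [E1 [Hl [Hn [Hc Hcl]]]]]]. injection E1; intros; subst x q. clear E1.
  apply chain_cons2 in Hc. destruct Hc as [Hvw Hc].
  assert (Hvw' : v <> w) by (intros ->; inversion Hn; subst; apply H1; left; auto).
  destruct (classic ((a = w /\ b = v) \/ (a = v /\ b = w))) as [Hab|Hab].
  - assert (Hn2 : NoDup (w :: rest ++ [v])).
    { apply Permutation_NoDup with (v :: w :: rest); auto.
      change (w :: rest ++ [v]) with ((w :: rest) ++ [v]). apply Permutation_cons_append. }
    assert (Hv : ~ In v (w :: rest)) by (inversion Hn; auto).
    assert (Hv' : ~ In v rest) by (intros Hx; apply Hv; right; auto).
    assert (Hr : rest <> []) by (intros ->; simpl in Hl; lia).
    assert (N1 := arc_no1 w v rest Hr Hn2 Hv').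
    assert (N2 : ~ adj_in (w :: rest ++ [v]) v w) by (intros Hx; eapply nodup_head_adj; eauto).
    exists (rest ++ [v]). split. destruct rest; discriminate. split; [exact Hn2|split].
    + apply chain_del.
      * apply chain_snoc; auto. rewrite <- last_cons with (d := v). exact Hcl.
      * destruct Hab as [[-> ->]|[-> ->]]; auto.
      * destruct Hab as [[-> ->]|[-> ->]]; auto.
    + rewrite last_last; reflexivity.
  - exists [v]. split. discriminate. split. constructor. intros [->|[]]; auto. constructor; auto. constructor.
    split; [|reflexivity]. simpl. split; auto. split. apply Hs; auto.
    split; intros [-> ->]; apply Hab; auto.
Qed.

Lemma cyc_head E v w rest : is_cycle V E (v :: w :: rest) -> E v w /\ v <> w.
Proof. intros [x [q [E1 [Hl [Hn [Hc Hcl]]]]]]. injection E1; intros; subst.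
  apply chain_cons2 in Hc. destruct Hc as [Hc1 _]. split. exact Hc1. intros ->. inversion Hn; subst. apply H1; left; auto. Qed.

Lemma on_k_first E v n : on_k_edge_disjoint_cycles V E v (S n) -> exists w rest, is_cycle V E (v :: w :: rest).
Proof. intros [C [Hc _]]. destruct (Hc 0 ltac:(lia)) as [H1 H2]. eapply rotate; eauto. Qed.

Lemma cyc_surv n : forall E v, sym E -> on_k_edge_disjoint_cycles V E v (S n) -> survives V n E v.
Proof. induction n as [n IH] using (well_founded_induction lt_wf). intros E v Hs Hk.
  destruct n as [|n']. exact I.
  destruct (on_k_first _ _ _ Hk) as [w [rest Hcy]]. destruct (cyc_head _ _ _ _ Hcy) as [Hvw _].
  split. exists w; auto.
  intros a b Hab. pose proof (del_on_k _ _ _ a b Hk) as Hk'.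
  assert (Hs' := del_sym E a b Hs).
  destruct (on_k_first _ _ _ Hk') as [w' [rest' Hcy']]. destruct (cyc_head _ _ _ _ Hcy') as [Hvw' Hne].
  exists w'. split.
  - exists [w']. split. discriminate. split. constructor. intros [->|[]]; auto. constructor; auto. constructor.
    split; [|reflexivity]. simpl; auto.
  - destruct n' as [|n'']. exact I. split. exists v; apply Hs'; auto.
    intros a' b' Hab'. exists v. split.
    + eapply cyc_step; eauto.
    + apply IH. lia. apply del_sym; auto. apply del_on_k. exact Hk'.
Qed.

Lemma cycles_evadible G : sym G -> (forall k, exists v, on_k_edge_disjoint_cycles V G v k) -> omega_evadible V G.
Proof. intros Hs Hk k. unfold k_evadible. destruct k as [|k].
  - destruct (Hk 0) as [v _]. exists v. exact I.
  - destruct (Hk (S k)) as [v Hv]. exists v. replace (S k - 1) with k by lia. apply cyc_surv; auto. Qed.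


Definition Good (d : V) H (Tp : V -> Prop) u v := (u = d /\ Tp v) \/ (v = d /\ Tp u) \/ H u v.
Definition avoids (d : V) H := forall a b, H a b -> a <> d /\ b <> d.

Lemma cyc_edge_cons (x u v : V) l : cyc_edge V (x :: l) u v ->
  (u = x /\ exists l', l = v :: l') \/ adj_in l u v \/ (u = last l x /\ v = x).
Proof. intros [[l1 [l2 E1]]|[x' [q [E1 [E2 E3]]]]].
  - destruct l1 as [|z l1]; simpl in E1; injection E1; intros; subst.
    + left. split; eauto.
    + right; left. exists l1, l2. reflexivity.
  - injection E1; intros; subst. right; right. auto. Qed.

Lemma chain_in_tail R x q y : chain V R (x :: q) -> In y q -> exists z, R z y.
Proof. intros Hc Hy. apply in_split in Hy. destruct Hy as [l1 [l2 ->]].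
  change (x :: l1 ++ y :: l2) with ((x :: l1) ++ y :: l2) in Hc.
  apply chain_app in Hc. destruct Hc as [Hc _]. exists (last l1 x). apply chain_snoc_inv; auto. Qed.

Lemma mkcycle E H d t1 q : sym E -> (forall x, ~ E x x) -> sym H -> subrel H E -> avoids d H ->
  q <> [] -> NoDup (t1 :: q) -> chain V H (t1 :: q) -> E d t1 -> E d (last q t1) ->
  is_cycle V E (d :: t1 :: q) /\ (forall u v, cycle_has_edge V (d :: t1 :: q) u v ->
     Good d (fun a b => H a b /\ (adj_in (t1 :: q) a b \/ adj_in (t1 :: q) b a))
            (fun t => t = t1 \/ t = last q t1) u v).
Proof. intros HsE Hirr HsH HHE Hav Hq Hn Hc Hd1 Hd2.
  assert (Hnd : ~ In d (t1 :: q)).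
  { intros [Hx|Hx]. subst. eapply Hirr; eauto.
    destruct (chain_in_tail _ _ _ _ Hc Hx) as [z Hz]. apply Hav in Hz. tauto. }
  split.
  - exists d, (t1 :: q). split; [reflexivity|]. split. destruct q; [congruence|]. simpl; lia.
    split. constructor; auto. split. apply chain_cons2. split; auto. eapply chain_mono; eauto.
    rewrite last_cons. apply HsE; auto.
  - intros u v [Hx|Hx]; apply cyc_edge_cons in Hx; rewrite ?last_cons in Hx.
    + destruct Hx as [[-> [l' El]]|[Hx|[-> ->]]].
      * injection El; intros; subst. left. split; auto.
      * right; right. split. eapply chain_adj; eauto. auto.
      * right; left. split; auto.
    + destruct Hx as [[-> [l' El]]|[Hx|[-> ->]]].
      * injection El; intros; subst. right; left. split; auto.
      * right; right. split. apply HsH. eapply chain_adj; eauto. auto.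
      * left. split; auto.
Qed.

Lemma good_disj d H1 H2 (T1 T2 : V -> Prop) p1 p2 :
  (forall a b, H1 a b -> H2 a b -> False) -> (forall t, T1 t -> T2 t -> False) ->
  avoids d H1 -> avoids d H2 -> (forall t, T1 t -> t <> d) -> (forall t, T2 t -> t <> d) ->
  (forall u v, cycle_has_edge V p1 u v -> Good d H1 T1 u v) ->
  (forall u v, cycle_has_edge V p2 u v -> Good d H2 T2 u v) -> edge_disjoint V p1 p2.
Proof. intros HH HT A1 A2 N1 N2 G1 G2 u v E1 E2. specialize (G1 u v E1). specialize (G2 u v E2).
  destruct G1 as [[-> G1]|[[-> G1]|G1]]; destruct G2 as [[E3 G2]|[[E3 G2]|G2]]; subst;
  try solve [eauto]; try solve [apply A1 in G1; tauto]; try solve [apply A2 in G2; tauto];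
  try solve [apply N1 in G1; tauto]; try solve [apply N2 in G2; tauto]. Qed.


Lemma partition (Pr : V -> Prop) L : NoDup L -> exists L1 L2, NoDup L1 /\ NoDup L2 /\ incl L1 L /\ incl L2 L /\
  length L1 + length L2 = length L /\ (forall t, In t L1 -> Pr t) /\ (forall t, In t L2 -> ~ Pr t).
Proof. induction L as [|x L IH]; intros Hn.
  - exists [], []. repeat split; simpl; auto; try (intros ? []); apply incl_refl.
  - inversion Hn as [|? ? Hx Hn']; subst. destruct (IH Hn') as [L1 [L2 [N1 [N2 [I1 [I2 [Hl [P1 P2]]]]]]]].
    destruct (classic (Pr x)) as [Hp|Hp].
    + exists (x :: L1), L2. repeat split; auto.
      * constructor; auto.
      * apply incl_cons. left; auto. apply incl_tl; auto.
      * apply incl_tl; auto.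
      * simpl; lia.
      * intros t [<-|Ht]; auto.
    + exists L1, (x :: L2). repeat split; auto.
      * constructor; auto.
      * apply incl_tl; auto.
      * apply incl_cons. left; auto. apply incl_tl; auto.
      * simpl; lia.
      * intros t [<-|Ht]; auto.
Qed.

Lemma pigeon (R : V -> V -> Prop) m : forall A L, NoDup L -> (forall t, In t L -> exists a, In a A /\ R t a) ->
  length A * m <= length L -> 0 < length L ->
  exists a L', NoDup L' /\ incl L' L /\ m <= length L' /\ (forall t, In t L' -> R t a).
Proof. induction A as [|a A IH]; intros L Hn HL Hl Hp.
  - destruct L as [|t L]. simpl in Hp; lia. destruct (HL t (or_introl eq_refl)) as [a [[] _]].
  - destruct (partition (fun t => R t a) L Hn) as [L1 [L2 [N1 [N2 [I1 [I2 [Hl2 [P1 P2]]]]]]]].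
    destruct (le_lt_dec m (length L1)) as [Hm|Hm].
    + exists a, L1. repeat split; auto.
    + destruct (IH L2 N2) as [b [L' [H1 [H2 [H3 H4]]]]].
      * intros t Ht. destruct (HL t (I2 t Ht)) as [b [[<-|Hb] Hr]]. exfalso; eapply P2; eauto. eauto.
      * simpl in Hl. lia.
      * simpl in Hl. lia.
      * exists b, L'. repeat split; auto. eapply incl_tran; eauto.
Qed.

Fixpoint Gf (P j : nat) : nat := match j with 0 => 0 | S j => 2 + (P + 1) * Gf P j end.

Lemma good_mono d H1 H2 (T1 T2 : V -> Prop) u v : subrel H1 H2 -> (forall t, T1 t -> T2 t) ->
  Good d H1 T1 u v -> Good d H2 T2 u v.
Proof. intros A B [[? ?]|[[? ?]|?]]; [left|right;left|right;right]; auto. Qed.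

Lemma KLj E P d : sym E -> (forall x, ~ E x x) -> (forall l, NoDup l -> chain V E l -> length l < P) ->
  forall j H T z, sym H -> subrel H E -> avoids d H -> NoDup T -> (forall t, In t T -> E d t) ->
  (forall t, In t T -> reach H t z) -> Gf P j <= length T ->
  exists C : nat -> list V,
    (forall i, i < j -> is_cycle V E (C i) /\ In d (C i) /\
        (forall u v, cycle_has_edge V (C i) u v -> Good d H (fun t => In t T) u v)) /\
    (forall i i', i < i' -> i' < j -> edge_disjoint V (C i) (C i')).
Proof. intros HsE Hirr HNP. induction j as [|j IH]; intros H T z HsH HHE Hav Hn HTd HTr Hl.
  { exists (fun _ => []). split; intros; lia. }
  simpl in Hl. destruct T as [|t1 [|t2 rest]]; simpl in Hl; try lia.
  assert (Hr12 : reach H t1 t2).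
  { eapply reach_trans. apply HTr; left; auto. apply reach_sym; auto. apply HTr; right; left; auto. }
  destruct (shorten _ _ _ Hr12) as [q [Hnq [Hcq Hlq]]].
  assert (Ht12 : t1 <> t2) by (intros ->; inversion Hn as [|? ? Hx _]; apply Hx; left; auto).
  assert (Hq : q <> []) by (intros ->; simpl in Hlq; congruence).
  destruct (mkcycle E H d t1 q HsE Hirr HsH HHE Hav Hq Hnq Hcq) as [Hcy Hgd].
  { apply HTd; left; auto. }
  { rewrite Hlq. apply HTd; right; left; auto. }
  set (pi := t1 :: q) in *.
  assert (Hpi : length pi < P) by (apply HNP; auto; eapply chain_mono; eauto).
  set (B := fun a b => adj_in pi a b \/ adj_in pi b a).
  set (H' := fun a b => H a b /\ ~ B a b).
  assert (HB : forall a b, B a b -> In a pi) by (intros a b [Hx|Hx]; apply adj_in_In in Hx; tauto).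
  assert (Hanc : forall t, In t rest -> exists a, In a (z :: pi) /\ reach H' t a).
  { intros t Ht. destruct (anchor H B pi t z HB (HTr t (or_intror (or_intror Ht)))) as [Hx|[s [Hs Hx]]].
    exists z; split; auto. left; auto. exists s; split; auto. right; auto. }
  inversion Hn as [|? ? Hn1 Hn']; subst. inversion Hn' as [|? ? Hn2 Hnr]; subst.
  assert (HT' : exists a T', NoDup T' /\ incl T' rest /\ Gf P j <= length T' /\ (forall t, In t T' -> reach H' t a)).
  { destruct (Nat.eq_dec (Gf P j) 0) as [E0|E0].
    - exists z, []. repeat split; auto. constructor. intros ? []. rewrite E0; auto. intros ? [].
    - apply pigeon with (A := z :: pi); auto.
      + simpl length. assert (S (length pi) <= P + 1) by lia.
        eapply Nat.le_trans. apply Nat.mul_le_mono_r. exact H0. lia.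
      + assert (0 < (P + 1) * Gf P j) by (apply Nat.mul_pos_pos; lia). lia. }
  destruct HT' as [a [T' [N' [I' [L' R']]]]].
  assert (HsH' : sym H').
  { intros x y [Hxy HBxy]. split. apply HsH; auto. intros [Hb|Hb]; apply HBxy; [right|left]; auto. }
  destruct (IH H' T' a HsH') as [C' [HC1 HC2]]; auto.
  { intros x y [Hxy _]. apply HHE; auto. }
  { intros x y [Hxy _]. apply Hav; auto. }
  { intros t Ht. apply HTd. right; right; auto. }
  exists (fun i => match i with 0 => d :: pi | S i => C' i end). split.
  - intros [|i] Hi.
    + split; [exact Hcy|]. split. left; auto. intros u v Huv. eapply good_mono; [| |apply Hgd; exact Huv].
      * intros x y [? _]; auto.
      * intros t [-> | ->]. left; auto. right; left; auto.
    + destruct (HC1 i ltac:(lia)) as [X1 [X2 X3]]. split; auto. split; auto.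
      intros u v Huv. eapply good_mono; [| |apply X3; exact Huv].
      * intros x y [? _]; auto.
      * intros t Ht. right; right; auto.
  - intros [|i] [|i'] Hii Hi'; try lia.
    + destruct (HC1 i' ltac:(lia)) as [X1 [X2 X3]].
      apply good_disj with (d := d) (H1 := fun a b => H a b /\ (adj_in pi a b \/ adj_in pi b a))
        (T1 := fun t => t = t1 \/ t = last q t1) (H2 := H') (T2 := fun t => In t T').
      * intros x y [_ Hb] [_ Hb']. apply Hb'. exact Hb.
      * intros t [-> | ->] Ht. apply Hn1. right; auto. apply Hn2; auto.
      * intros x y [Hxy _]; apply Hav; auto.
      * intros x y [Hxy _]; apply Hav; auto.
      * intros t [Ht|Ht] Hd; subst t. subst t1. eapply Hirr; apply HTd; left; eauto.
        apply (Hirr d). pattern d at 2. rewrite <- Hd. apply HTd. right; left; eauto.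
      * intros t Ht ->. eapply Hirr. apply HTd. right; right. apply I'. exact Ht.
      * exact Hgd.
      * exact X3.
    + apply HC2; lia.
Qed.


Definition cyclic E (d u : V) := E d u /\ exists w, w <> u /\ E d w /\ reach (avoid E d) u w.

Lemma avoid_sym E d : sym E -> sym (avoid E d).
Proof. intros Hs x y [H1 [H2 H3]]. split; auto. Qed.

Lemma indep (Rel : V -> V -> Prop) (HsR : forall x y, Rel x y -> Rel y x) (Hrefl : forall x, Rel x x) (z0 : V) m :
  forall j L, NoDup L -> j * m <= length L ->
  (exists z L', NoDup L' /\ incl L' L /\ m <= length L' /\ forall t, In t L' -> Rel t z) \/
  (exists U, NoDup U /\ incl U L /\ length U = j /\ forall a b, In a U -> In b U -> a <> b -> ~ Rel a b).
Proof. induction j as [|j IH]; intros L Hn Hl.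
  - right. exists []. split. constructor. split. intros ? []. split. reflexivity. intros ? ? [].
  - destruct L as [|u L0].
    + simpl in Hl. left. exists z0, []. split. constructor. split. intros ? []. split. simpl; lia. intros ? [].
    + inversion Hn as [|? ? Hu Hn0]; subst.
      destruct (partition (fun t => Rel u t) L0 Hn0) as [L1 [L2 [N1 [N2 [I1 [I2 [Hl2 [P1 P2]]]]]]]].
      destruct (le_lt_dec m (S (length L1))) as [Hm|Hm].
      * left. exists u, (u :: L1). repeat split.
        -- constructor; auto.
        -- apply incl_cons. left; auto. apply incl_tl; auto.
        -- simpl; lia.
        -- intros t [<-|Ht]; auto.
      * destruct (IH L2 N2) as [[z [L' [A1 [A2 [A3 A4]]]]]|[U [B1 [B2 [B3 B4]]]]].
        -- simpl in Hl. lia.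
        -- left. exists z, L'. repeat split; auto. eapply incl_tran; eauto. apply incl_tl; auto.
        -- right. exists (u :: U). repeat split.
           ++ constructor; auto.
           ++ apply incl_cons. left; auto. apply incl_tl. eapply incl_tran; eauto.
           ++ simpl; lia.
           ++ intros a b [<-|Ha] [<-|Hb] Hab.
              ** congruence.
              ** intros Hr. eapply P2. apply B2. exact Hb. exact Hr.
              ** intros Hr. eapply P2. apply B2. exact Ha. apply HsR. exact Hr.
              ** apply B4; auto.
Qed.

Lemma restrict R u : sym R -> forall x y, reach R x y -> reach R x u -> reach (fun a b => R a b /\ reach R a u) x y.
Proof. intros Hs x y Hr. induction Hr as [x|x y z Hxy Hyz IH]; intros Hxu. apply r_refl.
  eapply r_step. split; eauto. apply IH. eapply reach_trans. apply reach_edge. apply Hs; eauto. exact Hxu. Qed.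

Definition Hc E d (u : V) := fun a b => avoid E d a b /\ reach (avoid E d) a u.
Definition Tc E d (u : V) := fun t => reach (avoid E d) t u.

Lemma manycomp E d : sym E -> (forall x, ~ E x x) -> forall U, (forall u, In u U -> cyclic E d u) ->
  exists C : nat -> list V, forall i, i < length U -> is_cycle V E (C i) /\ In d (C i) /\
     forall x y, cycle_has_edge V (C i) x y -> Good d (Hc E d (nth i U d)) (Tc E d (nth i U d)) x y.
Proof. intros HsE Hirr. induction U as [|u U IH]; intros Hcy.
  - exists (fun _ => []). simpl; intros; lia.
  - destruct IH as [C' HC']. intros; apply Hcy; right; auto.
    destruct (Hcy u (or_introl eq_refl)) as [Hdu [w [Hwu [Hdw Hr]]]].
    assert (HsA := avoid_sym E d HsE).
    assert (Hr' : reach (Hc E d u) u w) by (apply restrict; auto; apply r_refl).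
    destruct (shorten _ _ _ Hr') as [q [Hnq [Hcq Hlq]]].
    assert (Hq : q <> []) by (intros ->; simpl in Hlq; congruence).
    destruct (mkcycle E (Hc E d u) d u q HsE Hirr) as [Hcyc Hgd]; auto.
    + intros a b [Hab Hau]. split. apply HsA; auto. eapply reach_trans. apply reach_edge. apply HsA; eauto. exact Hau.
    + intros a b [[Hab _] _]; auto.
    + intros a b [[_ Hab] _]; auto.
    + rewrite Hlq; auto.
    + exists (fun i => match i with 0 => d :: u :: q | S i => C' i end).
      intros [|i] Hi.
      * split; auto. split. left; auto. intros x y Hxy. eapply good_mono; [| |apply Hgd; exact Hxy].
        -- intros a b [? _]; auto.
        -- intros t [-> | ->]. apply r_refl. rewrite Hlq. apply reach_sym; auto.
      * apply HC'. simpl in Hi; lia.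
Qed.

Lemma reach_avoid_d E d u : reach (avoid E d) d u -> u = d.
Proof. intros Hr. inversion Hr; subst; auto. destruct H as [_ [? _]]. congruence. Qed.

Lemma KL E P Q d : sym E -> (forall x, ~ E x x) -> (forall l, NoDup l -> chain V E l -> length l < P) ->
  ~ on_k_edge_disjoint_cycles V E d Q ->
  forall L, NoDup L -> (forall u, In u L -> cyclic E d u) -> length L < Q * Gf P Q.
Proof. intros HsE Hirr HNP HnQ L Hn HL. apply Nat.nle_gt. intros Hle.
  assert (HsA := avoid_sym E d HsE).
  destruct (indep (reach (avoid E d)) (fun x y => reach_sym _ x y HsA) (@r_refl _) d (Gf P Q) Q L Hn) as
    [[z [L' [A1 [A2 [A3 A4]]]]]|[U [B1 [B2 [B3 B4]]]]].
  - lia.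
  - destruct (KLj E P d HsE Hirr HNP Q (avoid E d) L' z HsA) as [C [HC1 HC2]]; auto.
    + intros a b Hab; apply Hab.
    + intros a b [_ Hab]; exact Hab.
    + intros t Ht. apply HL. apply A2; auto.
    + apply HnQ. exists C. split; auto. intros i Hi. destruct (HC1 i Hi) as [X1 [X2 _]]; auto.
  - destruct (manycomp E d HsE Hirr U) as [C HC].
    + intros u Hu; apply HL; apply B2; auto.
    + apply HnQ. exists C. split.
      * intros i Hi. rewrite <- B3 in Hi. destruct (HC i Hi) as [X1 [X2 _]]; auto.
      * intros i i' Hii Hi'. rewrite <- B3 in Hi'.
        assert (Hne : nth i U d <> nth i' U d).
        { intros Heq. apply NoDup_nth in Heq; auto; lia. }
        assert (I1 : In (nth i U d) U) by (apply nth_In; lia).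
        assert (I2 : In (nth i' U d) U) by (apply nth_In; lia).
        assert (NR := B4 _ _ I1 I2 Hne).
        destruct (HC i ltac:(lia)) as [_ [_ G1]]. destruct (HC i' Hi') as [_ [_ G2]].
        apply good_disj with (d := d) (H1 := Hc E d (nth i U d)) (H2 := Hc E d (nth i' U d))
          (T1 := Tc E d (nth i U d)) (T2 := Tc E d (nth i' U d)); auto.
        -- intros a b [_ R1] [_ R2]. apply NR. eapply reach_trans. apply reach_sym; eauto. exact R2.
        -- intros t R1 R2. apply NR. eapply reach_trans. apply reach_sym; eauto. exact R2.
        -- intros a b [[_ X] _]; exact X.
        -- intros a b [[_ X] _]; exact X.
        -- intros t R1 ->. apply reach_avoid_d in R1. destruct (HL _ (B2 _ I1)) as [Hd _].
           rewrite R1 in Hd. exact (Hirr d Hd).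
        -- intros t R1 ->. apply reach_avoid_d in R1. destruct (HL _ (B2 _ I2)) as [Hd _].
           rewrite R1 in Hd. exact (Hirr d Hd).
Qed.


Definition meas E (d : V) n := forall q, NoDup (d :: q) -> chain V E (d :: q) -> length (d :: q) < n.
Definition pot E (d : V) k := forall L, NoDup L -> (forall u, In u L -> cyclic E d u) -> length L <= k.

Lemma meas_mono E F d n : subrel E F -> meas F d n -> meas E d n.
Proof. intros HS Hm q H1 H2. apply Hm; auto. eapply chain_mono; eauto. Qed.

Lemma avoid_mono E F d : subrel E F -> subrel (avoid E d) (avoid F d).
Proof. intros HS a b [H1 H2]. split; auto. Qed.

Lemma cyclic_mono E F d u : subrel E F -> cyclic E d u -> cyclic F d u.
Proof. intros HS [H1 [w [H2 [H3 H4]]]]. split; auto. exists w. repeat split; auto.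
  eapply reach_mono; [|exact H4]. apply avoid_mono; auto. Qed.

Lemma on_k_mono E F v k : subrel E F -> on_k_edge_disjoint_cycles V E v k -> on_k_edge_disjoint_cycles V F v k.
Proof. intros HS [C [H1 H2]]. exists C. split; auto. intros i Hi. destruct (H1 i Hi). split; auto.
  eapply is_cycle_mono; eauto. Qed.

Lemma herd G P Q : sym G -> (forall x, ~ G x x) -> (forall l, NoDup l -> chain V G l -> length l < P) ->
  (forall v, ~ on_k_edge_disjoint_cycles V G v Q) ->
  forall n E d c, sym E -> subrel E G -> meas E d n -> reach E c d ->
  ~ survives V (n * (Q * Gf P Q + 2)) E c.
Proof. intros HsG HirrG HNP HNC. set (K := Q * Gf P Q).
  assert (HpotK : forall E d, sym E -> subrel E G -> pot E d K).
  { intros E d HsE HsubE L Hn HL. assert (length L < K); [|lia]. apply (KL E P Q d); auto.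
    - intros x Hx. apply (HirrG x). apply HsubE; auto.
    - intros l H1 H2. apply HNP; auto. eapply chain_mono; eauto.
    - intros Hk. apply (HNC d). eapply on_k_mono; eauto. }
  induction n as [|n IHn]; intros E d c HsE HsubE Hm Hr.
  { exfalso. specialize (Hm [] ltac:(constructor; [intros []|constructor]) I). simpl in Hm. lia. }
  set (T := n * (K + 2)).
  assert (HirrE : forall E x, subrel E G -> ~ E x x) by (intros E' x HS Hx; apply (HirrG x); apply HS; auto).
  assert (noCyc_off : forall E c, sym E -> subrel E G -> meas E d (S n) -> reach E c d -> c <> d ->
            (forall u, ~ cyclic E d u) -> ~ survives V (S T) E c).
  { clear E c HsE HsubE Hm Hr. intros E c HsE HsubE Hm Hr Hne Hnc Hsv.
    destruct (firstd E d c Hr Hne) as [x [Hxd Hcx]].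
    assert (Huniq : forall x', E x' d -> reach (avoid E d) c x' -> x' = x).
    { intros x' Hx' Hcx'. apply NNPP; intros Hne'. apply (Hnc x). split. apply HsE; auto.
      exists x'. split; auto. split. apply HsE; auto. eapply reach_trans.
      apply reach_sym. apply avoid_sym; auto. exact Hcx. exact Hcx'. }
    destruct Hsv as [_ Hmv]. destruct (Hmv d x (HsE _ _ Hxd)) as [c' [Hmove Hsv']].
    apply (IHn (del_edge V E d x) x c').
    - apply del_sym; auto.
    - intros a b Hab. apply HsubE. apply Hab.
    - intros q Hnq Hcq.
      assert (Hxne : x <> d) by (intros ->; eapply HirrE; eauto).
      assert (Hnd : ~ In d (x :: q)).
      { intros Hin. assert (Hxd' : reach (del_edge V E d x) x d) by (eapply chain_reach_in; eauto).
        destruct (firstd _ d x Hxd' Hxne) as [x'' [Hx''d Hxx'']].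
        assert (x'' = x).
        { apply Huniq. apply Hx''d. eapply reach_trans. exact Hcx. eapply reach_mono; [|exact Hxx''].
          apply avoid_mono. apply del_sub. }
        subst x''. destruct Hx''d as [_ [_ H2]]. apply H2. split; reflexivity. }
      assert (length (d :: x :: q) < S n).
      { apply Hm. constructor; auto. apply chain_cons2. split. apply HsE; auto.
        eapply chain_mono; [|exact Hcq]. apply del_sub. }
      simpl in *. lia.
    - eapply reach_trans. apply reach_sym. apply del_sym; auto. apply cat_move_reach; exact Hmove.
      eapply reach_mono; [|exact Hcx]. intros a b [Hab [Ha Hb]]. split; auto.
      split; intros [? ?]; subst; congruence.
    - exact Hsv'. }
  assert (noCyc_any : forall k E c, sym E -> subrel E G -> meas E d (S n) -> reach E c d ->
            (forall u, ~ cyclic E d u) -> ~ survives V (k + 2 + T) E c).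
  { clear E c HsE HsubE Hm Hr. intros k E c HsE HsubE Hm Hr Hnc Hsv.
    destruct (classic (c = d)) as [->|Hne].
    - apply survives_le with (m := S (S T)) in Hsv; [|lia].
      destruct Hsv as [[y Hy] Hmv]. destruct (Hmv d y Hy) as [c' [Hmove Hsv']].
      apply (noCyc_off (del_edge V E d y) c').
      + apply del_sym; auto.
      + intros a b Hab. apply HsubE. apply Hab.
      + eapply meas_mono; [|exact Hm]. apply del_sub.
      + apply reach_sym. apply del_sym; auto. apply cat_move_reach; exact Hmove.
      + apply cat_move_neq in Hmove. exact Hmove.
      + intros u Hu. apply (Hnc u). eapply cyclic_mono; [|exact Hu]. apply del_sub.
      + exact Hsv'.
    - apply (noCyc_off E c); auto. eapply survives_le; [|exact Hsv]. lia. }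
  assert (main_k : forall k E c, sym E -> subrel E G -> meas E d (S n) -> reach E c d -> pot E d k ->
            ~ survives V (k + 2 + T) E c).
  { clear E c HsE HsubE Hm Hr. induction k as [|k IHk]; intros E c HsE HsubE Hm Hr Hp Hsv.
    - destruct (classic (exists u, cyclic E d u)) as [[u Hu]|Hnc].
      + specialize (Hp [u] ltac:(constructor; [intros []|constructor])). simpl in Hp.
        assert (1 <= 0); [|lia]. apply Hp. intros u' [<-|[]]; auto.
      + apply (noCyc_any 0 E c); auto. intros u Hu; apply Hnc; eauto.
    - destruct (classic (exists u, cyclic E d u)) as [[u Hu]|Hnc].
      + apply survives_le with (m := S (k + 2 + T)) in Hsv; [|lia].
        destruct Hsv as [_ Hmv]. destruct Hu as [Hdu [w [Hwu [Hdw Hrw]]]].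
        destruct (Hmv d u Hdu) as [c' [Hmove Hsv']].
        assert (Hdne : d <> u) by (intros ->; eapply HirrE; eauto).
        assert (HE'sym := del_sym E d u HsE).
        assert (Hdu' : reach (del_edge V E d u) d u).
        { eapply r_step with w. split; auto. split; intros [? ?]; subst; congruence.
          apply reach_sym; auto. eapply reach_mono; [|exact Hrw].
          intros a b [Hab [Ha Hb]]. split; auto. split; intros [? ?]; subst; congruence. }
        apply (IHk (del_edge V E d u) c'); auto.
        * intros a b Hab. apply HsubE. apply Hab.
        * eapply meas_mono; [|exact Hm]. apply del_sub.
        * eapply reach_trans. apply reach_sym; auto. apply cat_move_reach; exact Hmove.
          eapply reach_sub; [|exact Hr]. intros a b Hab.
          destruct (classic (a = d /\ b = u)) as [[-> ->]|H1]. exact Hdu'.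
          destruct (classic (a = u /\ b = d)) as [[-> ->]|H2]. apply reach_sym; auto.
          apply reach_edge. split; auto.
        * intros L HnL HL. assert (length (u :: L) <= S k); [|simpl in *; lia].
          apply Hp.
          -- constructor; auto. intros HuL. destruct (HL u HuL) as [[_ [X _]] _]. apply X; auto.
          -- intros y [<-|Hy]. split; auto. exists w; auto.
             eapply cyclic_mono; [|apply HL; exact Hy]. apply del_sub.
      + apply (noCyc_any (S k) E c); auto. intros u Hu; apply Hnc; eauto. }
  intros Hsv. apply (main_k K E c); auto.
Qed.

End L.

Theorem mainTheorem19 (V : Type) (adj : V -> V -> Prop) :
  simple_graph V adj ->
  (omega_evadible V adj <->
   ((forall k : nat, has_path_on V adj k) \/
    (forall k : nat, exists v : V, on_k_edge_disjoint_cycles V adj v k))).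
Proof.
  intros [HsG HirrG]. split.
  - intros Hom. apply NNPP. intros Hno. apply not_or_and in Hno. destruct Hno as [H1 H2].
    apply not_all_ex_not in H1. destruct H1 as [P HP].
    apply not_all_ex_not in H2. destruct H2 as [Q HQ].
    assert (HNC : forall v, ~ on_k_edge_disjoint_cycles V adj v Q) by (intros v Hv; apply HQ; exists v; exact Hv).
    assert (HNP : forall l, NoDup l -> chain V adj l -> length l < P).
    { intros l Hn Hc. apply Nat.nle_gt. intros Hl. apply HP. exists (firstn P l).
      assert (El : l = firstn P l ++ skipn P l) by (symmetry; apply firstn_skipn).
      split. rewrite length_firstn. lia. rewrite El in Hn, Hc. split.
      eapply NoDup_app_remove_r; eauto. eapply chain_prefix; eauto. }
    destruct (Hom (S (P * (Q * Gf P Q + 2)))) as [c Hc].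
    replace (S (P * (Q * Gf P Q + 2)) - 1) with (P * (Q * Gf P Q + 2)) in Hc by lia.
    apply (herd V adj P Q HsG HirrG HNP HNC P adj c c HsG); auto.
    + intros x y H; exact H.
    + intros q Hn Hc'. apply HNP; auto.
    + apply r_refl.
  - intros [H|H]. apply paths_evadible; auto. apply cycles_evadible; auto.
Qed.
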